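(* Let $(S_n^{(1)},S_n^{(2)})_{n\ge0}$ be a two-elephant walking model with $\alpha_1\alpha_2\ne0$ and $\lambda_\alpha\ne\pm1$. Then for every $n\ge1$, $$x_n=\beta_n(\lambda_\alpha)\Big(x_1+\sum_{j=1}^{n-1}\frac{\gamma_j(\lambda_\alpha)}{\beta_{j+1}(\lambda_\alpha)}\varepsilon^{(x)}_{j+1}\Big),\qquad y_n=\beta_n(-\lambda_\alpha)\Big(y_1+\sum_{j=1}^{n-1}\frac{\gamma_j(-\lambda_\alpha)}{\beta_{j+1}(-\lambda_\alpha)}\varepsilon^{(y)}_{j+1}\Big),$$ and $(\varepsilon^{(x)}_{j+1})_{j\ge1}$, $(\varepsilon^{(y)}_{j+1})_{j\ge1}$ are martingale difference sequences with respect to $(\mathcal F_{j+1})_{j\ge1}$.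
   Context: Two-elephant walking model: fix $p_1,p_2\in[0,1]$, $\alpha_i=2p_i-1$. Let $(\xi_n^{(1)})_{n\ge2}$ be i.i.d. Bernoulli($p_1$), $(\xi_n^{(2)})_{n\ge2}$ i.i.d. Bernoulli($p_2$), $(u_n^{(1)})_{n\ge1}$, $(u_n^{(2)})_{n\ge1}$ independent with $u_n^{(i)}$ uniform on $\{1,\dots,n\}$, all mutually independent. $S_0^{(i)}=0$, $X_1^{(1)},X_1^{(2)}\in\{-1,1\}$ given, and for $n\ge1$: $X_{n+1}^{(1)}:=(2\xi^{(1)}_{n+1}-1)X^{(2)}_{u_n^{(2)}}$, $X_{n+1}^{(2)}:=(2\xi^{(2)}_{n+1}-1)X^{(1)}_{u_n^{(1)}}$, $S_n^{(i)}=\sum_{k\le n}X_k^{(i)}$; $\mathcal F_n:=\sigma(X_j^{(i)}:1\le j\le n,\ i=1,2)$. Notation: $\lambda_\alpha:=\operatorname{sgn}(\alpha_2)\sqrt{\alpha_1\alpha_2}$ if $\alpha_1\alpha_2>0$ and $\lambda_\alpha:=\mathrm i\operatorname{sgn}(\alpha_2)\sqrt{-\alpha_1\alpha_2}$ if $\alpha_1\alpha_2<0$; $r_\alpha:=\sqrt{\alpha_1/\alpha_2}$ if $\alpha_1\alpha_2>0$ and $r_\alpha:=\mathrm i\sqrt{-\alpha_1/\alpha_2}$ if $\alpha_1\alpha_2<0$. For $n\ge1$: $\gamma_n(\pm\lambda_\alpha):=\frac{1\pm\lambda_\alpha}{n+1}$, $\beta_n(\pm\lambda_\alpha):=\prod_{k=1}^{n-1}(1-\gamma_k(\pm\lambda_\alpha))=\frac{\Gamma(n\mp\lambda_\alpha)}{\Gamma(1\mp\lambda_\alpha)\Gamma(n+1)}$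 (with $\beta_1=1$); $x_n:=\frac{S_n^{(1)}-r_\alpha S_n^{(2)}}{n}$, $y_n:=\frac{S_n^{(1)}+r_\alpha S_n^{(2)}}{n}$; and for $j\ge1$ $$\varepsilon^{(x)}_{j+1}:=\frac{1}{1+\lambda_\alpha}\big(X^{(1)}_{j+1}-r_\alpha X^{(2)}_{j+1}+\lambda_\alpha x_j\big),\qquad \varepsilon^{(y)}_{j+1}:=\frac{1}{1-\lambda_\alpha}\big(X^{(1)}_{j+1}+r_\alpha X^{(2)}_{j+1}-\lambda_\alpha y_j\big).$$ *)

(* Defs.v *)
From HB Require Import structures.
From mathcomp Require Import all_boot all_order all_algebra.
From mathcomp Require Import all_classical all_reals all_analysis.
From mathcomp Require Import complex.

Set Implicit Arguments.
Unset Strict Implicit.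
Unset Printing Implicit Defensive.

Import Order.TTheory GRing.Theory Num.Theory.
Local Open Scope classical_set_scope.
Local Open Scope ring_scope.

Definition alpha {R : realType} (p : R) : R := 2 * p - 1.

Definition lambda_a {R : realType} (a1 a2 : R) : R[i] :=
  if 0 < a1 * a2 then Complex (Num.sg a2 * Num.sqrt (a1 * a2)) 0
  else Complex 0 (Num.sg a2 * Num.sqrt (- (a1 * a2))).

(* r_alpha (complex) ; only meaningful when a1 * a2 != 0 *)
Definition r_a {R : realType} (a1 a2 : R) : R[i] :=
  if 0 < a1 * a2 then Complex (Num.sqrt (a1 / a2)) 0
  else Complex 0 (Num.sqrt (- (a1 / a2))).

Definition gam {R : realType} (n : nat) (z : R[i]) : R[i] := (1 + z) / (n.+1)%:R.

Definition bet {R : realType} (n : nat) (z : R[i]) : R[i] :=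
  \prod_(1 <= k < n) (1 - gam k z).

Definition sgnb (b : bool) : int := if b then 1 else -1.

(* walk a b xi1 xi2 u1 u2 n = [:: (X_1^(1), X_1^(2)); ...; (X_n^(1), X_n^(2))]
   with X_1^(1) = a, X_1^(2) = b and, for m >= 1,
   X_{m+1}^(1) = (2 xi^(1)_{m+1} - 1) X^(2)_{u^(2)_m},
   X_{m+1}^(2) = (2 xi^(2)_{m+1} - 1) X^(1)_{u^(1)_m}.
   (X_k is stored at position k-1.) *)
Fixpoint walk (a b : int) (xi1 xi2 : nat -> bool) (u1 u2 : nat -> nat)
    (n : nat) : seq (int * int) :=
  match n with
  | 0 => [::]
  | 1 => [:: (a, b)]
  | (m.+1) as n' =>
      let s := walk a b xi1 xi2 u1 u2 m in
      rcons s ((sgnb (xi1 n') * (nth (0, 0) s (u2 m).-1).2)%R,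
               (sgnb (xi2 n') * (nth (0, 0) s (u1 m).-1).1)%R)
  end.

Section Model.
Context {R : realType} {d : measure_display} {T : measurableType d}.
Variables (a b : int) (Xi1 Xi2 : nat -> T -> bool) (U1 U2 : nat -> T -> nat).

Definition Xs (n : nat) (w : T) : seq (int * int) :=
  walk a b (fun k => Xi1 k w) (fun k => Xi2 k w)
           (fun k => U1 k w) (fun k => U2 k w) n.

Definition X1 (k : nat) (w : T) : int := (nth (0, 0) (Xs k w) k.-1).1.
Definition X2 (k : nat) (w : T) : int := (nth (0, 0) (Xs k w) k.-1).2.

Definition S1 (n : nat) (w : T) : int := \sum_(1 <= k < n.+1) X1 k w.
Definition S2 (n : nat) (w : T) : int := \sum_(1 <= k < n.+1) X2 k w.

(* the natural filtration F_n = sigma(X_j^(i) : 1 <= j <= n, i = 1,2):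
   since the generating vector takes values in a countable set (with the
   discrete sigma-algebra), F_n is the family of its preimages. *)
Definition filtr (n : nat) : set (set T) :=
  [set A | exists B : set (seq (int * int)), A = Xs n @^-1` B].

Variables (lam r : R[i]).

Definition xn (n : nat) (w : T) : R[i] :=
  ((S1 n w)%:~R - r * (S2 n w)%:~R) / n%:R.
Definition yn (n : nat) (w : T) : R[i] :=
  ((S1 n w)%:~R + r * (S2 n w)%:~R) / n%:R.

(* epsx k = eps^(x)_k, meaningful for k = j + 1 with j >= 1 *)
Definition epsx (k : nat) (w : T) : R[i] :=
  ((X1 k w)%:~R - r * (X2 k w)%:~R + lam * xn k.-1 w) / (1 + lam).
Definition epsy (k : nat) (w : T) : R[i] :=
  ((X1 k w)%:~R + r * (X2 k w)%:~R - lam * yn k.-1 w) / (1 - lam).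

End Model.

(* indices of the driving variables: XiI i n = xi^(i)_n, UI i n = u^(i)_n
   (false = elephant 1, true = elephant 2) *)
Inductive elIdx := XiI of bool & nat | UI of bool & nat.

Definition elValid (i : elIdx) : Prop :=
  match i with XiI _ n => (2 <= n)%N | UI _ n => (1 <= n)%N end.

Definition elFam {T : Type} (Xi1 Xi2 : nat -> T -> bool) (U1 U2 : nat -> T -> nat)
  (i : elIdx) (w : T) : nat :=
  match i with
  | XiI false n => nat_of_bool (Xi1 n w)
  | XiI true n => nat_of_bool (Xi2 n w)
  | UI false n => U1 n w
  | UI true n => U2 n w
  end.

Definition mutually_independent_nat {R : realType} {d : measure_display}
  {T : measurableType d} (P : probability T R) {I : Type} (V : I -> Prop)
  (Y : I -> T -> nat) : Prop :=
  forall (m : nat) (f : 'I_m -> I), injective f -> (forall k, V (f k)) ->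
  forall v : 'I_m -> nat,
    P [set w | forall k, Y (f k) w = v k] =
    (\prod_(k < m) P [set w | Y (f k) w = v k])%E.

(* (eps_{j+1})_{j >= 1} is a (complex-valued) martingale difference sequence
   w.r.t. (F_{j+1})_{j >= 1}: eps_{j+1} is F_{j+1}-measurable (real and
   imaginary parts), integrable, and E[eps_{j+1} | F_j] = 0, i.e. its
   integral over every F_j-set vanishes. *)
Definition mds_from1 {R : realType} {d : measure_display} {T : measurableType d}
  (P : probability T R) (F : nat -> set (set T)) (eps : nat -> T -> R[i]) : Prop :=
  forall j : nat, (1 <= j)%N ->
    [/\ forall B : set R, measurable B ->
          F j.+1 [set w | complex.Re (eps j.+1 w) \in B] /\
          F j.+1 [set w | complex.Im (eps j.+1 w) \in B],
        P.-integrable setT (fun w => (complex.Re (eps j.+1 w))%:E),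
        P.-integrable setT (fun w => (complex.Im (eps j.+1 w))%:E)
      & forall A, F j A ->
          (\int[P]_(w in A) (complex.Re (eps j.+1 w))%:E = 0)%E /\
          (\int[P]_(w in A) (complex.Im (eps j.+1 w))%:E = 0)%E].

(* Main.v *)
Require Import Defs.
From HB Require Import structures.
From mathcomp Require Import all_boot all_order all_algebra.
From mathcomp Require Import all_classical all_reals all_analysis.
From mathcomp Require Import complex.
From mathcomp Require Import ring lra zify.
From mathcomp Require Import measurable_realfun.
Import Order.TTheory GRing.Theory Num.Theory.
Local Open Scope classical_set_scope.
Local Open Scope complex_scope.
Local Open Scope ring_scope.
Section Walk.
Variables (a b : int) (xi1 xi2 : nat -> bool) (u1 u2 : nat -> nat).
Local Notation W := (walk a b xi1 xi2 u1 u2).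

Lemma walkSS m : W m.+2 = rcons (W m.+1)
  ((sgnb (xi1 m.+2) * (nth (0, 0) (W m.+1) (u2 m.+1).-1).2)%R,
   (sgnb (xi2 m.+2) * (nth (0, 0) (W m.+1) (u1 m.+1).-1).1)%R).
Proof. by []. Qed.

Lemma size_walk n : size (W n) = n.
Proof. by elim: n => [|[|m] IH] //; rewrite walkSS size_rcons IH. Qed.

Lemma walk_prefix m n : (m <= n)%N -> W m = take m (W n).
Proof.
elim: n => [|n IH]; first by rewrite leqn0 => /eqP ->.
rewrite leq_eqVlt => /orP[/eqP ->|]; first by rewrite take_oversize // size_walk.
rewrite ltnS => hm; rewrite (IH hm); case: n IH hm => [|n] _.
  by rewrite leqn0 => /eqP ->.
move=> hm; rewrite walkSS -cats1 takel_cat // size_walk //.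
Qed.
End Walk.

Lemma walk_ext (a b : int) xi1 xi2 u1 u2 xi1' xi2' u1' u2' m :
  (forall k, (2 <= k <= m)%N -> xi1 k = xi1' k /\ xi2 k = xi2' k) ->
  (forall k, (1 <= k < m)%N -> u1 k = u1' k /\ u2 k = u2' k) ->
  walk a b xi1 xi2 u1 u2 m = walk a b xi1' xi2' u1' u2' m.
Proof.
elim: m => [|[|m] IH] hx hu //.
rewrite !walkSS IH; last 2 first.
- by move=> k /andP[k2 km]; apply: hx; rewrite k2 /= (leq_trans km).
- by move=> k /andP[k1 km]; apply: hu; rewrite k1 /= (ltn_trans km).
have [-> ->] : xi1 m.+2 = xi1' m.+2 /\ xi2 m.+2 = xi2' m.+2 by apply: hx; rewrite /= leqnn.
have [-> ->] : u1 m.+1 = u1' m.+1 /\ u2 m.+1 = u2' m.+1 by apply: hu; rewrite /= ltnSn.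
by [].
Qed.
Section Lam.
Variable R : realType.
Implicit Types u v s : R.

Lemma lam_real u v s : v != 0 -> s ^+ 2 = 1 ->
  let l := Complex (s * (u * v)) 0 in let r := Complex (u / v) 0 in
  [/\ l ^+ 2 = Complex (u ^+ 2 * v ^+ 2) 0, l * r = Complex (s * u ^+ 2) 0
    & r * Complex (s * v ^+ 2) 0 = l].
Proof.
move=> v0 s2 l r; rewrite /l /r expr2; split; simpc; apply/eqP;
  rewrite eq_complex /= ?eqxx ?andbT; apply/eqP.
- by transitivity (s^+2 * (u^+2*v^+2)); [ring| rewrite s2 mul1r].
- by field.
- by field.
Qed.

Lemma lam_imag u v s : v != 0 -> s ^+ 2 = 1 ->
  let l := Complex 0 (s * (u * v)) in let r := Complex 0 (u / v) in
  [/\ l ^+ 2 = Complex (- (u ^+ 2 * v ^+ 2)) 0, l * r = Complex (- (s * u ^+ 2)) 0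
    & r * Complex (s * v ^+ 2) 0 = l].
Proof.
move=> v0 s2 l r; rewrite /l /r expr2; split; simpc; apply/eqP;
  rewrite eq_complex /= ?eqxx ?andbT; apply/eqP.
- by transitivity (- (s^+2 * (u^+2*v^+2))); [ring| rewrite s2 mul1r].
- by field.
- by field.
Qed.
End Lam.
Lemma lam_props (R : realType) (a1 a2 : R) : a1 * a2 != 0 ->
  [/\ lambda_a a1 a2 ^+ 2 = (a1 * a2)%:C, lambda_a a1 a2 * r_a a1 a2 = a1%:C
    & r_a a1 a2 * a2%:C = lambda_a a1 a2].
Proof.
rewrite mulf_eq0 negb_or => /andP[]; rewrite !neq_lt => /orP[h1|h1] /orP[h2|h2];
  rewrite /lambda_a /r_a.
- have p : 0 < a1 * a2 by rewrite -mulrNN mulr_gt0 // oppr_gt0.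
  have n1 : 0 <= - a1 by rewrite oppr_ge0 ltW.
  have n2 : 0 <= - a2 by rewrite oppr_ge0 ltW.
  rewrite p ltr0_sg // -[a1 * a2]mulrNN (sqrtrM _ n1).
  rewrite -[a1 / a2]mulrNN -invrN (sqrtrM _ n1) sqrtrV //.
  set u := Num.sqrt (- a1); set v := Num.sqrt (- a2).
  have hu : u ^+ 2 = - a1 by rewrite sqr_sqrtr.
  have hv : v ^+ 2 = - a2 by rewrite sqr_sqrtr.
  have v0 : v != 0 by rewrite gt_eqF // sqrtr_gt0 oppr_gt0.
  case: (@lam_real _ u v (-1) v0 ltac:(by rewrite sqrrN expr1n)) => e1 e2 e3.
  split.
  + by rewrite e1 hu hv mulrNN.
  + by rewrite e2 hu mulN1r opprK.
  + by rewrite -e3 hv mulN1r opprK.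
- have p : ~~ (0 < a1 * a2) by rewrite -leNgt; nra.
  have n1 : 0 <= - a1 by rewrite oppr_ge0 ltW.
  have n2 : 0 <= a2 by rewrite ltW.
  rewrite (negbTE p) gtr0_sg // -[- (a1 * a2)]mulNr (sqrtrM _ n1).
  rewrite -[- (a1 / a2)]mulNr (sqrtrM _ n1) sqrtrV //.
  set u := Num.sqrt (- a1); set v := Num.sqrt a2.
  have hu : u ^+ 2 = - a1 by rewrite sqr_sqrtr.
  have hv : v ^+ 2 = a2 by rewrite sqr_sqrtr.
  have v0 : v != 0 by rewrite gt_eqF // sqrtr_gt0.
  case: (@lam_imag _ u v 1 v0 ltac:(by rewrite expr1n)) => e1 e2 e3.
  split.
  + by rewrite e1 hu hv mulNr opprK.
  + by rewrite e2 hu mul1r opprK.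
  + by rewrite -e3 hv mul1r.
- have p : ~~ (0 < a1 * a2) by rewrite -leNgt; nra.
  have n1 : 0 <= a1 by rewrite ltW.
  have n2 : 0 <= - a2 by rewrite oppr_ge0 ltW.
  rewrite (negbTE p) ltr0_sg // -[- (a1 * a2)]mulrN (sqrtrM _ n1).
  rewrite -[- (a1 / a2)]mulrN -invrN (sqrtrM _ n1) sqrtrV //.
  set u := Num.sqrt a1; set v := Num.sqrt (- a2).
  have hu : u ^+ 2 = a1 by rewrite sqr_sqrtr.
  have hv : v ^+ 2 = - a2 by rewrite sqr_sqrtr.
  have v0 : v != 0 by rewrite gt_eqF // sqrtr_gt0 oppr_gt0.
  case: (@lam_imag _ u v (-1) v0 ltac:(by rewrite sqrrN expr1n)) => e1 e2 e3.
  split.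
  + by rewrite e1 hu hv mulrN opprK.
  + by rewrite e2 hu mulN1r opprK.
  + by rewrite -e3 hv mulN1r opprK.
- have p : 0 < a1 * a2 by rewrite mulr_gt0.
  have n1 : 0 <= a1 by rewrite ltW.
  have n2 : 0 <= a2 by rewrite ltW.
  rewrite p gtr0_sg // (sqrtrM _ n1) (sqrtrM _ n1) sqrtrV //.
  set u := Num.sqrt a1; set v := Num.sqrt a2.
  have hu : u ^+ 2 = a1 by rewrite sqr_sqrtr.
  have hv : v ^+ 2 = a2 by rewrite sqr_sqrtr.
  have v0 : v != 0 by rewrite gt_eqF // sqrtr_gt0.
  case: (@lam_real _ u v 1 v0 ltac:(by rewrite expr1n)) => e1 e2 e3.
  split.
  + by rewrite e1 hu hv.
  + by rewrite e2 hu mul1r.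
  + by rewrite -e3 hv mul1r.
Qed.
Section Formula.
Variable R : realType.

Lemma bet1 (z : R[i]) : bet 1 z = 1.
Proof. by rewrite /bet big_geq. Qed.

Lemma betS n (z : R[i]) : (1 <= n)%N -> bet n.+1 z = bet n z * (1 - gam n z).
Proof. by move=> hn; rewrite /bet big_nat_recr. Qed.

Lemma gam_neq1 k (z : R[i]) : z != k%:R -> 1 - gam k z != 0.
Proof.
move=> hz; apply: contra hz; rewrite subr_eq0 => /eqP h.
have k0 : (k.+1%:R : R[i]) != 0 by rewrite pnatr_eq0.
have : 1 + z = k.+1%:R by rewrite -[1 + z](divfK k0) -/(gam k z) -h mul1r.
by rewrite -natr1 addrC => /addIr ->.
Qed.

Lemma bet_neq0 n (z : R[i]) : (forall k, (1 <= k)%N -> z != k%:R) -> bet n z != 0.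
Proof.
move=> hk; rewrite /bet big_nat_cond; apply: (big_ind (fun x => x != 0)) => //.
- by move=> x y; apply: mulf_neq0.
- by move=> i /andP[/andP[hi _] _]; apply: gam_neq1; apply: hk.
Qed.

Lemma formula (xs es : nat -> R[i]) z :
  (forall n, (1 <= n)%N -> xs n.+1 = (1 - gam n z) * xs n + gam n z * es n.+1) ->
  (forall k, (1 <= k)%N -> z != k%:R) ->
  forall n, (1 <= n)%N -> xs n = bet n z * (xs 1%N +
     \sum_(1 <= j < n) gam j z / bet j.+1 z * es j.+1).
Proof.
move=> hrec hk; elim=> [//|n IH] hn.
case: n IH hn => [|n] IH _; first by rewrite bet1 big_geq // addr0 mul1r.
have h1 : (1 <= n.+1)%N by [].
rewrite hrec // big_nat_recr //= (IH h1).
have := @bet_neq0 n.+2 z hk; rewrite betS // => hb.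
field.
by move: hb; rewrite mulf_eq0 negb_or andbC.
Qed.

Lemma not_nat (l : R[i]) (c : R) : l ^+ 2 = c%:C -> c <= 1 -> l != 1 ->
  forall k, (1 <= k)%N -> l != k%:R.
Proof.
move=> hl hc l1 [//|[//|k]] _.
apply/eqP => e; move: hl; rewrite e -(rmorph_nat (real_complex R)) -rmorphXn => /complexI hc'.
have : (2 : R) <= k.+2%:R by rewrite ler_nat.
rewrite -hc' in hc; nra.
Qed.

End Formula.
Section Rec.
Variables (R : realType) (d : measure_display) (T : measurableType d).
Variables (a b : int) (Xi1 Xi2 : nat -> T -> bool) (U1 U2 : nat -> T -> nat).
Variables (lam r : R[i]).

Lemma S1S n w : S1 a b Xi1 Xi2 U1 U2 n.+1 w =
  (S1 a b Xi1 Xi2 U1 U2 n w + X1 a b Xi1 Xi2 U1 U2 n.+1 w)%R.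
Proof. by rewrite /S1 big_nat_recr. Qed.
Lemma S2S n w : S2 a b Xi1 Xi2 U1 U2 n.+1 w =
  (S2 a b Xi1 Xi2 U1 U2 n w + X2 a b Xi1 Xi2 U1 U2 n.+1 w)%R.
Proof. by rewrite /S2 big_nat_recr. Qed.

Lemma recx n w : (1 <= n)%N -> 1 + lam != 0 ->
  xn a b Xi1 Xi2 U1 U2 r n.+1 w = (1 - gam n lam) * xn a b Xi1 Xi2 U1 U2 r n w
    + gam n lam * epsx a b Xi1 Xi2 U1 U2 lam r n.+1 w.
Proof.
move=> hn hl; rewrite /xn /epsx /gam /= S1S S2S !intrD /xn.
have n0 : (n%:R : R[i]) != 0 by rewrite pnatr_eq0 -lt0n.
have n1 : (n.+1%:R : R[i]) != 0 by rewrite pnatr_eq0.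
by field; rewrite hl n0 nat1r n1.
Qed.

Lemma recy n w : (1 <= n)%N -> 1 - lam != 0 ->
  yn a b Xi1 Xi2 U1 U2 r n.+1 w = (1 - gam n (- lam)) * yn a b Xi1 Xi2 U1 U2 r n w
    + gam n (- lam) * epsy a b Xi1 Xi2 U1 U2 lam r n.+1 w.
Proof.
move=> hn hl; rewrite /yn /epsy /gam /= S1S S2S !intrD /yn.
have n0 : (n%:R : R[i]) != 0 by rewrite pnatr_eq0 -lt0n.
have n1 : (n.+1%:R : R[i]) != 0 by rewrite pnatr_eq0.
by field; rewrite hl n0 nat1r n1.
Qed.
End Rec.
Definition elenc (i : elIdx) : bool * bool * nat :=
  match i with XiI c n => (true, c, n) | UI c n => (false, c, n) end.
Definition eldec (x : bool * bool * nat) : elIdx :=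
  let: (t, c, n) := x in if t then XiI c n else UI c n.
Lemma elencK : cancel elenc eldec. Proof. by case. Qed.
HB.instance Definition _ := Equality.copy elIdx (can_type elencK).

Fixpoint allseq (N n : nat) : seq (seq nat) :=
  if n is n'.+1 then [seq x :: s | x <- iota 0 N, s <- allseq N n'] else [:: [::]].

Lemma size_allseq N n s : s \in allseq N n -> size s = n.
Proof.
elim: n s => [|n IH] s /=; first by rewrite inE => /eqP ->.
by case/allpairsP => -[x t] /= [_ ht ->] /=; rewrite IH.
Qed.

Lemma uniq_allseq N n : uniq (allseq N n).
Proof.
elim: n => [//|n IH] /=; apply: allpairs_uniq => //; first exact: iota_uniq.
by move=> [x s] [y t] _ _ /= [-> ->].
Qed.

Lemma sum_iota0 (R : realType) N (F : nat -> R) :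
  \sum_(x <- iota 0 N) F x = \sum_(x < N) F x.
Proof. by rewrite -(big_mkord xpredT) /index_iota subn0. Qed.

Section Box.
Variable R : realType.
Variables (pi : elIdx -> nat -> R) (N : nat).

Fixpoint boxsum (l : seq elIdx) (G : seq nat -> R) : R :=
  if l is i :: l' then \sum_(x < N) pi i x * boxsum l' (fun s => G (nat_of_ord x :: s))
  else G [::].

Lemma boxsum_app l1 l2 G : boxsum (l1 ++ l2) G =
  boxsum l1 (fun s1 => boxsum l2 (fun s2 => G (s1 ++ s2))).
Proof. by elim: l1 G => [//|i l1 IH] G /=; apply: eq_bigr => x _; rewrite IH. Qed.

Lemma boxsum_ext l G G' : (forall s, size s = size l -> G s = G' s) ->
  boxsum l G = boxsum l G'.
Proof.
elim: l G G' => [|i l IH] G G' h /=; first exact: h.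
by apply: eq_bigr => x _; congr (_ * _); apply: IH => s hs; apply: h; rewrite /= hs.
Qed.

Lemma boxsum0 l : boxsum l (fun _ => 0) = 0.
Proof.
elim: l => [//|i l IH] /=; rewrite big1 // => x _.
by rewrite (_ : boxsum l _ = 0) ?mulr0 //.
Qed.

Lemma boxsum_const l c : (forall i, i \in l -> \sum_(x < N) pi i x = 1) ->
  boxsum l (fun _ => c) = c.
Proof.
elim: l => [//|i l IH] h /=; rewrite IH; last by move=> j hj; apply: h; rewrite inE hj orbT.
by rewrite -mulr_suml h ?mem_head // mul1r.
Qed.

Lemma boxsumE l G : boxsum l G = \sum_(s <- allseq N (size l))
  G s * \prod_(k < size l) pi (nth (XiI false 0) l k) (nth 0%N s k).
Proof.
elim: l G => [|i l IH] G /=; first by rewrite big_seq1 big_ord0 mulr1.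
rewrite big_allpairs_dep /= sum_iota0.
apply: eq_bigr => x _; rewrite IH big_distrr /=; apply: eq_bigr => s _.
by rewrite big_ord_recl /=; ring.
Qed.
End Box.
Arguments boxsum {R}.
Lemma dmeas_pre d (T : measurableType d) (C : countType) (Z : T -> C) :
  (forall c, measurable [set w | Z w = c]) -> forall S : set C, measurable (Z @^-1` S).
Proof.
move=> mZ S.
have -> : Z @^-1` S = \bigcup_(c in [set: C]) ([set w | Z w = c] `&` [set _ | S c]).
  apply/seteqP; split => [w Sw|w [c _ [/= <- //]]].
  by exists (Z w) => //.
apply: countable_bigcupT_measurable => // c.
case: (pselect (S c)) => h.
  by rewrite (_ : [set _ | S c] = setT) ?setIT //; apply/seteqP; split.
by rewrite (_ : [set _ | S c] = set0) ?setI0 //; apply/seteqP; split.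
Qed.

Section Meas.
Local Open Scope ereal_scope.
Variables (R : realType) (d : measure_display) (T : measurableType d) (P : probability T R).
Variables (Xi1 Xi2 : nat -> T -> bool) (U1 U2 : nat -> T -> nat).
Local Notation Y := (elFam Xi1 Xi2 U1 U2).
Hypothesis mY : forall i x, elValid i -> measurable [set w | Y i w = x].
Hypothesis Hind : mutually_independent_nat P elValid Y.

Definition Yl (l : seq elIdx) (w : T) : seq nat := map (fun i => Y i w) l.
Definition piY i x : R := fine (P [set w | Y i w = x]).

Lemma mYl l s : (forall i, i \in l -> elValid i) -> measurable [set w | Yl l w = s].
Proof.
elim: l s => [|i l IH] s hv.
  case: s => [|x s].
    by rewrite (_ : [set _ | _] = setT) //; apply/seteqP; split.
  by rewrite (_ : [set _ | _] = set0) //; apply/seteqP; split.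
case: s => [|x s].
  by rewrite (_ : [set _ | _] = set0) //; apply/seteqP; split.
rewrite (_ : [set _ | _] = [set w | Y i w = x] `&` [set w | Yl l w = s]).
  apply: measurableI; first by apply: mY; apply: hv; rewrite mem_head.
  by apply: IH => j hj; apply: hv; rewrite inE hj orbT.
by apply/seteqP; split => w /= [-> ->].
Qed.

Lemma mGl l (G : seq nat -> R) : (forall i, i \in l -> elValid i) ->
  measurable_fun [set: T] (EFin \o (G \o Yl l)).
Proof.
move=> hv _ B mB; rewrite setTI.
have -> : (EFin \o (G \o Yl l)) @^-1` B = Yl l @^-1` [set s | B (G s)%:E] by [].
by apply: dmeas_pre => s; apply: mYl.
Qed.

Lemma PYl l s : uniq l -> (forall i, i \in l -> elValid i) -> size s = size l ->
  P [set w | Yl l w = s] =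
  (\prod_(k < size l) piY (nth (XiI false 0) l k) (nth 0%N s k))%:E.
Proof.
move=> ul hv hs.
have -> : [set w | Yl l w = s] =
    [set w | forall k : 'I_(size l), Y (nth (XiI false 0) l k) w = nth 0%N s k].
  apply/seteqP; split => w /=.
    by move=> <- k; rewrite (nth_map (XiI false 0)).
  move=> h; apply: (@eq_from_nth _ 0%N); first by rewrite size_map hs.
  move=> k; rewrite size_map => hk.
  by rewrite (nth_map (XiI false 0)) // (h (Ordinal hk)).
rewrite (@Hind (size l) (fun k : 'I_(size l) => nth (XiI false 0) l k)).
- rewrite -prodEFin; apply: eq_bigr => k _.
  by rewrite /piY fineK // fin_num_measure //; apply: mY; apply: hv; apply: mem_nth.
- by move=> k1 k2 /eqP; rewrite nth_uniq // => /eqP /val_inj.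
- by move=> k; apply: hv; apply: mem_nth.
Qed.

Lemma integral_Yl l N (G : seq nat -> R) : uniq l -> (forall i, i \in l -> elValid i) ->
  (forall i, i \in l -> (\sum_(x < N) piY i x = 1)%R) ->
  \int[P]_w (G (Yl l w))%:E = (boxsum piY N l G)%:E.
Proof.
move=> ul hv h1.
pose S := allseq N (size l).
pose E s := [set w | Yl l w = s].
pose U := \big[setU/set0]_(s <- S) E s.
have mE s : measurable (E s) by apply: mYl.
have mU : measurable U by apply: bigsetU_measurable.
have tE : trivIset [set` S] E.
  apply/trivIsetP => s t _ _ st; apply/seteqP; split => // w [/= e1 e2].
  by move: st; rewrite -e1 -e2 eqxx.
have hUG : forall G', \int[P]_(w in U) (G' (Yl l w))%:E = (boxsum piY N l G')%:E.
  move=> G'.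
  rewrite (integral_bigsetU_EFin _ mE (uniq_allseq N (size l)) tE); last first.
    by apply: (measurable_funS measurableT) => //; apply: (mGl l G' hv).
  rewrite boxsumE -sumEFin big_seq [RHS]big_seq; apply: eq_bigr => s hs.
  rewrite (eq_integral (cst (G' s)%:E)); last by move=> w; rewrite inE /= => ->.
  rewrite integral_cst // EFinM; congr (_ * _).
  exact: (PYl _ _ ul hv (size_allseq _ _ _ hs)).
have PU : P U = 1.
  have := hUG (fun _ => 1%R); rewrite boxsum_const //.
  by rewrite (eq_integral (cst 1%:E)) // integral_cst // mul1e.
have PNU : P (~` U) = 0 by rewrite probability_setC // PU subee.
rewrite -(setUv U) integral_setU //; last 3 first.
- exact: measurableC.
- by apply: (measurable_funS measurableT) => //; apply: (mGl l G hv).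
- by rewrite /disj_set setICr.
rewrite hUG null_set_integral ?adde0 //; first exact: measurableC.
by apply: (measurable_funS measurableT) => //; apply: (mGl l G hv).
Qed.

End Meas.
Section DlS.
Local Open Scope nat_scope.
Definition newI m := [:: XiI false m.+2; XiI true m.+2; UI false m.+1; UI true m.+1].
Fixpoint Dl m := if m is m'.+1 then Dl m' ++ newI m' else [::].

Lemma size_Dl m : size (Dl m) = 4 * m.
Proof. by elim: m => [//|m IH] /=; rewrite size_cat IH /=; lia. Qed.

Lemma nth_Dl m k c : (k < m)%N -> (c < 4)%N ->
  nth (XiI false 0) (Dl m) (4 * k + c) = nth (XiI false 0) (newI k) c.
Proof.
elim: m => [//|m IH] hk hc /=; rewrite nth_cat size_Dl.
case: (ltngtP k m) => [km|mk|->].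
- by rewrite (_ : 4 * k + c < 4 * m) ?IH //; lia.
- lia.
- by rewrite ltnNge leq_addr /= addKn.
Qed.

Definition Dl_ok m (i : elIdx) : bool :=
  match i with XiI _ n => (2 <= n <= m.+1)%N | UI _ n => (1 <= n <= m)%N end.

Lemma mem_Dl m i : i \in Dl m -> Dl_ok m i.
Proof.
elim: m i => [//|m IH] i /=; rewrite mem_cat => /orP[/IH|].
  by case: i => [c n|c n] /= /andP[-> h] /=; lia.
by rewrite !inE => /or4P[] /eqP -> /=; lia.
Qed.

Lemma uniq_Dl m : uniq (Dl m).
Proof.
elim: m => [//|m IH] /=; rewrite cat_uniq IH andTb.
apply/andP; split.
  apply/hasPn => i; rewrite !inE => /or4P[] /eqP -> ; apply/negP => /mem_Dl /=; lia.
by rewrite /newI /=.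
Qed.

End DlS.
Section Dec.
Local Open Scope nat_scope.
Variables (a b : int).

Definition dxi1 (s : seq nat) k := nth 0 s (4 * (k - 2) + 0) == 1.
Definition dxi2 (s : seq nat) k := nth 0 s (4 * (k - 2) + 1) == 1.
Definition du1 (s : seq nat) k := nth 0 s (4 * (k - 1) + 2).
Definition du2 (s : seq nat) k := nth 0 s (4 * (k - 1) + 3).
Definition Phi m s := walk a b (dxi1 s) (dxi2 s) (du1 s) (du2 s) m.

Lemma nth_cat_r (s1 s2 : seq nat) n c : size s1 = n ->
  nth 0 (s1 ++ s2) (n + c) = nth 0 s2 c.
Proof. by move=> <-; rewrite nth_cat ltnNge leq_addr /= addKn. Qed.

Lemma nth_cat_l (s1 s2 : seq nat) i : i < size s1 -> nth 0 (s1 ++ s2) i = nth 0 s1 i.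
Proof. by move=> h; rewrite nth_cat h. Qed.

Lemma Phi_cat j s1 s2 : size s1 = 4 * j -> Phi j.+1 (s1 ++ s2) = Phi j.+1 s1.
Proof.
move=> hs; apply: walk_ext => k hk;
  rewrite /dxi1 /dxi2 /du1 /du2 !nth_cat_l // hs; lia.
Qed.

Lemma Phi_step j s1 x1 x2 x3 x4 : size s1 = 4 * j ->
  Phi j.+2 (s1 ++ [:: x1; x2; x3; x4]) = rcons (Phi j.+1 s1)
   ((sgnb (x1 == 1) * (nth (0, 0) (Phi j.+1 s1) x4.-1).2)%R,
    (sgnb (x2 == 1) * (nth (0, 0) (Phi j.+1 s1) x3.-1).1)%R).
Proof.
move=> hs; rewrite /Phi walkSS -/(Phi j.+1 _) Phi_cat //.
rewrite /dxi1 /dxi2 /du1 /du2 !subSS !subn0 !nth_cat_r //.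
Qed.
End Dec.
Section Sums.
Variable R : realType.

Lemma Eaff N (p f : nat -> R) u v : \sum_(x < N) p x = 1 ->
  \sum_(x < N) p x * (u * f x + v) = u * (\sum_(x < N) p x * f x) + v.
Proof.
move=> h1.
under eq_bigr do rewrite mulrDr.
rewrite big_split /= -mulr_suml h1 mul1r mulr_sumr; congr (_ + _).
by apply: eq_bigr => x _; rewrite mulrCA.
Qed.

Lemma inner_calc N (q1 q2 q3 q4 f1 f2 g1 g2 : nat -> R) u1 u2 C :
  \sum_(x < N) q1 x = 1 -> \sum_(x < N) q2 x = 1 ->
  \sum_(x < N) q3 x = 1 -> \sum_(x < N) q4 x = 1 ->
  \sum_(x1 < N) q1 x1 * \sum_(x2 < N) q2 x2 * \sum_(x3 < N) q3 x3 *
    \sum_(x4 < N) q4 x4 * (u1 * (f1 x1 * g2 x4) + u2 * (f2 x2 * g1 x3) + C)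
  = u1 * (\sum_(x < N) q1 x * f1 x) * (\sum_(x < N) q4 x * g2 x)
    + u2 * (\sum_(x < N) q2 x * f2 x) * (\sum_(x < N) q3 x * g1 x) + C.
Proof.
move=> h1 h2 h3 h4.
set E1 := \sum_(x < N) q1 x * f1 x; set E2 := \sum_(x < N) q2 x * f2 x.
set E3 := \sum_(x < N) q3 x * g1 x; set E4 := \sum_(x < N) q4 x * g2 x.
have e4 x1 x2 x3 : \sum_(x4 < N) q4 x4 * (u1 * (f1 x1 * g2 x4) + u2 * (f2 x2 * g1 x3) + C)
    = (u1 * f1 x1) * E4 + (u2 * (f2 x2 * g1 x3) + C).
  transitivity (\sum_(x4 < N) q4 x4 * ((u1 * f1 x1) * g2 x4 + (u2 * (f2 x2 * g1 x3) + C))).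
    by apply: eq_bigr => x4 _; congr (_ * _); ring.
  by rewrite Eaff.
have e3 x1 x2 : \sum_(x3 < N) q3 x3 * \sum_(x4 < N) q4 x4 *
      (u1 * (f1 x1 * g2 x4) + u2 * (f2 x2 * g1 x3) + C)
    = (u2 * f2 x2) * E3 + (u1 * f1 x1 * E4 + C).
  transitivity (\sum_(x3 < N) q3 x3 * ((u2 * f2 x2) * g1 x3 + (u1 * f1 x1 * E4 + C))).
    by apply: eq_bigr => x3 _; rewrite e4; congr (_ * _); ring.
  by rewrite Eaff.
have e2 x1 : \sum_(x2 < N) q2 x2 * \sum_(x3 < N) q3 x3 * \sum_(x4 < N) q4 x4 *
      (u1 * (f1 x1 * g2 x4) + u2 * (f2 x2 * g1 x3) + C)
    = (u2 * E3) * E2 + (u1 * f1 x1 * E4 + C).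
  transitivity (\sum_(x2 < N) q2 x2 * ((u2 * E3) * f2 x2 + (u1 * f1 x1 * E4 + C))).
    by apply: eq_bigr => x2 _; rewrite e3; congr (_ * _); ring.
  by rewrite Eaff.
transitivity (\sum_(x1 < N) q1 x1 * ((u1 * E4) * f1 x1 + (u2 * E3 * E2 + C))).
  by apply: eq_bigr => x1 _; rewrite e2; congr (_ * _); ring.
rewrite Eaff // -/E1; ring.
Qed.

Lemma sumXi N (p : R) (f : nat -> R) : (2 <= N)%N ->
  \sum_(x < N) (if nat_of_ord x == 1%N then p else if nat_of_ord x == 0%N then 1 - p else 0) * f x
  = (1 - p) * f 0%N + p * f 1%N.
Proof.
case: N => [|[|N]] // _.
rewrite !big_ord_recl /= big1 ?addr0 // => i _.
by rewrite /bump /= mul0r.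
Qed.

Lemma sumU N n (f : nat -> R) : (1 <= n)%N -> (n < N)%N ->
  \sum_(x < N) (if (1 <= x <= n)%N then n%:R^-1 else 0) * f x
  = n%:R^-1 * \sum_(1 <= x < n.+1) f x.
Proof.
move=> hn hN.
rewrite -(big_mkord xpredT (fun x => (if (1 <= x <= n)%N then n%:R^-1 else 0) * f x)).
rewrite (big_cat_nat (n := n.+1)) // big_ltn // /= mul0r add0r.
rewrite [X in _ + X]big1_seq ?addr0; last first.
  move=> x /andP[_]; rewrite mem_index_iota => /andP[h _].
  by rewrite (_ : (x <= n)%N = false) ?andbF ?mul0r //; apply/negbTE; rewrite -ltnNge.
rewrite mulr_sumr; apply: eq_big_nat => x /andP[h1 h2].
by rewrite h1 /= -ltnS h2.
Qed.

End Sums.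
Section CHelp.
Variable R : realType.
Lemma ReD (x y : R[i]) : complex.Re (x + y) = complex.Re x + complex.Re y. Proof. by case: x; case: y. Qed.
Lemma ImD (x y : R[i]) : complex.Im (x + y) = complex.Im x + complex.Im y. Proof. by case: x; case: y. Qed.
Lemma ReMr (c : R[i]) (x : R) : complex.Re (c * x%:C) = complex.Re c * x.
Proof. by case: c => cr ci; simpc. Qed.
Lemma ImMr (c : R[i]) (x : R) : complex.Im (c * x%:C) = complex.Im c * x.
Proof. by case: c => cr ci; simpc. Qed.
Lemma intrC (n : int) : (n%:~R : R[i]) = (n%:~R : R)%:C.
Proof. by rewrite (rmorph_int (real_complex R)). Qed.
Lemma divC (x : R) (n : nat) : (x / n%:R)%:C = x%:C / n%:R.
Proof. by rewrite rmorphM fmorphV /= (rmorph_nat (real_complex R)). Qed.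
End CHelp.
Definition S1' (z : seq (int * int)) n : int := (\sum_(1 <= k < n.+1) (nth (0, 0) z k.-1).1)%R.
Definition S2' (z : seq (int * int)) n : int := (\sum_(1 <= k < n.+1) (nth (0, 0) z k.-1).2)%R.

Definition Hf {R : realType} j (e1 e2 e3 e4 : R) (z : seq (int * int)) : R :=
  e1 * ((nth (0, 0) z j).1)%:~R + e2 * ((nth (0, 0) z j).2)%:~R
  + e3 * (S1' z j)%:~R + e4 * (S2' z j)%:~R.

Lemma S1'_rcons z e j : size z = j -> S1' (rcons z e) j = S1' z j.
Proof.
move=> hz; apply: eq_big_nat => k /andP[k1 kj].
by rewrite nth_rcons hz (_ : (k.-1 < j)%N = true) //; lia.
Qed.
Lemma S2'_rcons z e j : size z = j -> S2' (rcons z e) j = S2' z j.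
Proof.
move=> hz; apply: eq_big_nat => k /andP[k1 kj].
by rewrite nth_rcons hz (_ : (k.-1 < j)%N = true) //; lia.
Qed.

Section Model2.
Variables (R : realType) (d : measure_display) (T : measurableType d).
Variables (P : probability T R) (p1 p2 : R) (a b : int).
Variables (Xi1 Xi2 : nat -> T -> bool) (U1 U2 : nat -> T -> nat).
Hypothesis hX1 : forall n, (2 <= n)%N ->
     measurable [set w | Xi1 n w] /\ P [set w | Xi1 n w] = p1%:E.
Hypothesis hX2 : forall n, (2 <= n)%N ->
     measurable [set w | Xi2 n w] /\ P [set w | Xi2 n w] = p2%:E.
Hypothesis hU1 : forall n k, (1 <= n)%N -> measurable [set w | U1 n w = k] /\
     P [set w | U1 n w = k] = (if (1 <= k <= n)%N then n%:R^-1 else 0)%:E.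
Hypothesis hU2 : forall n k, (1 <= n)%N -> measurable [set w | U2 n w = k] /\
     P [set w | U2 n w = k] = (if (1 <= k <= n)%N then n%:R^-1 else 0)%:E.
Hypothesis Hind : mutually_independent_nat P elValid (elFam Xi1 Xi2 U1 U2).

Local Notation Y := (elFam Xi1 Xi2 U1 U2).
Local Notation YL := (Yl d T Xi1 Xi2 U1 U2).
Local Notation pi := (piY R d T P Xi1 Xi2 U1 U2).
Local Notation XS := (Xs a b Xi1 Xi2 U1 U2).

Lemma bool_sets (A : T -> bool) p x : measurable [set w | A w] ->
  P [set w | A w] = p%:E ->
  measurable [set w | nat_of_bool (A w) = x] /\
  fine (P [set w | nat_of_bool (A w) = x]) =
    (if x == 1%N then p else if x == 0%N then 1 - p else 0).
Proof.
move=> mA PA; case: x => [|[|x]].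
- have -> : [set w | nat_of_bool (A w) = 0%N] = ~` [set w | A w].
    by apply/seteqP; split => w /=; case: (A w).
  split; first exact: measurableC.
  by rewrite probability_setC // PA.
- have -> : [set w | nat_of_bool (A w) = 1%N] = [set w | A w].
    by apply/seteqP; split => w /=; case: (A w).
  by rewrite PA.
- have -> : [set w | nat_of_bool (A w) = x.+2] = set0.
    by apply/seteqP; split => w //=; case: (A w).
  by rewrite measure0.
Qed.

Lemma mY i x : elValid i -> measurable [set w | Y i w = x].
Proof.
case: i => [[] n|[] n] /= hn.
- by case: (hX2 n hn) => m1 m2; case: (bool_sets _ _ x m1 m2).
- by case: (hX1 n hn) => m1 m2; case: (bool_sets _ _ x m1 m2).
- by case: (hU2 n x hn).
- by case: (hU1 n x hn).
Qed.

Lemma piXi c n x : (2 <= n)%N -> pi (XiI c n) x =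
  (if x == 1%N then (if c then p2 else p1) else if x == 0%N then 1 - (if c then p2 else p1) else 0).
Proof.
rewrite /piY; case: c => /= hn.
- by case: (hX2 n hn) => m1 m2; case: (bool_sets _ _ x m1 m2).
- by case: (hX1 n hn) => m1 m2; case: (bool_sets _ _ x m1 m2).
Qed.

Lemma piU c n x : (1 <= n)%N -> pi (UI c n) x =
  (if (1 <= x <= n)%N then n%:R^-1 else 0).
Proof.
rewrite /piY; case: c => /= hn.
- by rewrite (hU2 n x hn).2.
- by rewrite (hU1 n x hn).2.
Qed.

Lemma sumXi' c n N (f : nat -> R) : (2 <= n)%N -> (2 <= N)%N ->
  \sum_(x < N) pi (XiI c n) x * f x =
  (1 - (if c then p2 else p1)) * f 0%N + (if c then p2 else p1) * f 1%N.
Proof.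
move=> hn hN; rewrite -(@sumXi R N _ f hN); apply: eq_bigr => x _; by rewrite piXi.
Qed.

Lemma sumU' c n N (f : nat -> R) : (1 <= n)%N -> (n < N)%N ->
  \sum_(x < N) pi (UI c n) x * f x = n%:R^-1 * \sum_(1 <= x < n.+1) f x.
Proof.
move=> hn hN; rewrite -(@sumU R N n f hn hN); apply: eq_bigr => x _; by rewrite piU.
Qed.

Lemma sum1 j i : i \in Dl j -> \sum_(x < j.+1) pi i x = 1.
Proof.
move/mem_Dl; case: i => [c n|c n] /= /andP[h1 h2].
- have e := sumXi' c n j.+1 (fun _ => 1) h1 (leq_trans h1 h2).
  rewrite /= !mulr1 subrK in e; rewrite -e.
  by apply: eq_bigr => x _; rewrite mulr1.
- have e := sumU' c n j.+1 (fun _ => 1) h1 h2.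
  rewrite /= sumr_const_nat subSS subn0 mulVf ?pnatr_eq0 -?lt0n // in e.
  by rewrite -e; apply: eq_bigr => x _; rewrite mulr1.
Qed.

Lemma valid_Dl j i : i \in Dl j -> elValid i.
Proof. by move/mem_Dl; case: i => [c n|c n] /= /andP[]. Qed.

Lemma nth_Yl j k c w : (k < j)%N -> (c < 4)%N ->
  nth 0%N (YL (Dl j) w) (4 * k + c)%N = Y (nth (XiI false 0) (newI k) c) w.
Proof.
move=> hk hc; rewrite /Yl (nth_map (XiI false 0)) ?nth_Dl // size_Dl; lia.
Qed.

Lemma Xs_Phi j m w : (m <= j.+1)%N -> XS m w = Phi a b m (YL (Dl j) w).
Proof.
move=> hm; rewrite /Xs /Phi; apply: walk_ext.
- move=> [|[|k]] // hk; rewrite /dxi1 /dxi2 !subSS !subn0 !nth_Yl //=; try lia.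
- move=> [|k] // hk; rewrite /du1 /du2 !subSS !subn0 !nth_Yl //=; lia.
Qed.

Lemma S1_pref n M w : (n <= M)%N -> S1 a b Xi1 Xi2 U1 U2 n w = S1' (XS M w) n.
Proof.
move=> hn; apply: eq_big_nat => k /andP[k1 kn].
have hkM : (k <= M)%N by lia.
rewrite /X1 /Xs (walk_prefix _ _ _ _ _ _ _ _ hkM) nth_take //; lia.
Qed.
Lemma S2_pref n M w : (n <= M)%N -> S2 a b Xi1 Xi2 U1 U2 n w = S2' (XS M w) n.
Proof.
move=> hn; apply: eq_big_nat => k /andP[k1 kn].
have hkM : (k <= M)%N by lia.
rewrite /X2 /Xs (walk_prefix _ _ _ _ _ _ _ _ hkM) nth_take //; lia.
Qed.


Definition Hc j (c1 c2 c3 c4 : R[i]) (z : seq (int * int)) : R[i] :=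
  c1 * ((nth (0, 0) z j).1)%:~R + c2 * ((nth (0, 0) z j).2)%:~R
  + c3 * (S1' z j)%:~R + c4 * (S2' z j)%:~R.

Lemma ReHc j c1 c2 c3 c4 z : complex.Re (Hc j c1 c2 c3 c4 z) =
  Hf j (complex.Re c1) (complex.Re c2) (complex.Re c3) (complex.Re c4) z.
Proof. by rewrite /Hc /Hf !ReD !intrC !ReMr. Qed.
Lemma ImHc j c1 c2 c3 c4 z : complex.Im (Hc j c1 c2 c3 c4 z) =
  Hf j (complex.Im c1) (complex.Im c2) (complex.Im c3) (complex.Im c4) z.
Proof. by rewrite /Hc /Hf !ImD !intrC !ImMr. Qed.

Lemma core j' (B : set (seq (int * int))) (e1 e2 e3 e4 : R) :
  e1 * (alpha p1 / j'.+1%:R) + e4 = 0 -> e2 * (alpha p2 / j'.+1%:R) + e3 = 0 ->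
  (\int[P]_(w in XS j'.+1 @^-1` B) (Hf j'.+1 e1 e2 e3 e4 (XS j'.+2 w))%:E = 0)%E.
Proof.
move=> c1 c2.
pose G s := if Phi a b j'.+1 s \in B then Hf j'.+1 e1 e2 e3 e4 (Phi a b j'.+2 s) else 0.
rewrite integral_mkcond.
transitivity (\int[P]_w (G (YL (Dl j'.+1) w))%:E)%E.
  apply: eq_integral => w _; rewrite /patch /G -!Xs_Phi //.
  have -> : (w \in XS j'.+1 @^-1` B) = (XS j'.+1 w \in B).
    by apply/idP/idP => /set_mem h; apply/mem_set.
  by case: ifP.
rewrite (integral_Yl _ _ _ _ _ _ _ _ mY Hind (Dl j'.+1) j'.+2 G (uniq_Dl _)
   (@valid_Dl _) (@sum1 _)).
congr (_%:E).
rewrite (_ : Dl j'.+1 = Dl j' ++ newI j') // boxsum_app.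
rewrite (boxsum_ext _ _ _ _ _ (fun _ => 0)) ?boxsum0 // => s1; rewrite size_Dl => hs1.
set z := Phi a b j'.+1 s1.
have hz : size z = j'.+1 by rewrite size_walk.
case: (boolP (z \in B)) => hB; last first.
  rewrite (boxsum_ext _ _ _ _ _ (fun _ => 0)) ?boxsum0 // => s2 _.
  by rewrite /G (Phi_cat _ _ j' s1 s2 hs1) -/z (negbTE hB).
pose f1 (x : nat) : R := (sgnb (x == 1%N))%:~R.
pose g1 (x : nat) : R := ((nth (0, 0) z x.-1).1)%:~R.
pose g2 (x : nat) : R := ((nth (0, 0) z x.-1).2)%:~R.
pose C := e3 * (S1' z j'.+1)%:~R + e4 * (S2' z j'.+1)%:~R.
rewrite (boxsum_ext _ _ _ _ _ (fun s2 => e1 * (f1 (nth 0%N s2 0) * g2 (nth 0%N s2 3))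
   + e2 * (f1 (nth 0%N s2 1) * g1 (nth 0%N s2 2)) + C)); last first.
  move=> [|x1 [|x2 [|x3 [|x4 [|? ?]]]]] // _.
  rewrite /G (Phi_cat _ _ j' s1 _ hs1) -/z hB (Phi_step _ _ _ _ _ _ _ _ hs1) -/z /Hf.
  rewrite nth_rcons hz ltnn eqxx /= S1'_rcons // S2'_rcons // !intrM.
  by rewrite /C addrA.
have m1 i : i \in newI j' -> \sum_(x < j'.+2) pi i x = 1.
  by move=> hi; apply: sum1; rewrite /= mem_cat hi orbT.
rewrite /= inner_calc; try by apply: m1; rewrite !inE eqxx ?orbT.
rewrite (sumXi' false j'.+2 j'.+2 f1) // (sumXi' true j'.+2 j'.+2 f1) //.
rewrite (sumU' true j'.+1 j'.+2 g2) // (sumU' false j'.+1 j'.+2 g1) //.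
have f10 : f1 0%N = -1 by rewrite /f1 /= rmorphN1.
have f11 : f1 1%N = 1 by rewrite /f1 /= rmorph1.
have eS1 : \sum_(1 <= x < j'.+2) g1 x = (S1' z j'.+1)%:~R by rewrite /S1' rmorph_sum.
have eS2 : \sum_(1 <= x < j'.+2) g2 x = (S2' z j'.+1)%:~R by rewrite /S2' rmorph_sum.
rewrite f10 f11 eS1 eS2 /C.
set s1' := (S1' z j'.+1)%:~R; set s2' := (S2' z j'.+1)%:~R.
transitivity (s2' * (e1 * (alpha p1 / j'.+1%:R) + e4) + s1' * (e2 * (alpha p2 / j'.+1%:R) + e3)).
  by rewrite /alpha; ring.
by rewrite c1 c2 !mulr0 addr0.
Qed.
Lemma core_int j (e1 e2 e3 e4 : R) :
  P.-integrable setT (fun w => (Hf j e1 e2 e3 e4 (XS j.+1 w))%:E).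
Proof.
pose G s := Hf j e1 e2 e3 e4 (Phi a b j.+1 s).
have -> : (fun w => (Hf j e1 e2 e3 e4 (XS j.+1 w))%:E) = EFin \o (G \o YL (Dl j)).
  by apply/funext => w; rewrite /= (Xs_Phi j).
apply/integrableP; split; first exact: (mGl _ _ _ _ _ _ _ mY (Dl j) G (@valid_Dl j)).
rewrite (_ : (\int[P]_x _)%E = (boxsum pi j.+1 (Dl j) (fun s => `|G s|))%:E) ?ltry //.
exact: (integral_Yl _ _ _ _ _ _ _ _ mY Hind (Dl j) j.+1 (fun s => `|G s|) (uniq_Dl _)
   (@valid_Dl _) (@sum1 _)).
Qed.

Lemma mds_gen (eps : nat -> T -> R[i]) (c1 c2 c3 c4 : nat -> R[i]) :
  (forall j w, (1 <= j)%N -> eps j.+1 w =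
     c1 j * (X1 a b Xi1 Xi2 U1 U2 j.+1 w)%:~R + c2 j * (X2 a b Xi1 Xi2 U1 U2 j.+1 w)%:~R
     + c3 j * (S1 a b Xi1 Xi2 U1 U2 j w)%:~R + c4 j * (S2 a b Xi1 Xi2 U1 U2 j w)%:~R) ->
  (forall j, (1 <= j)%N -> c1 j * (alpha p1 / j%:R)%:C + c4 j = 0) ->
  (forall j, (1 <= j)%N -> c2 j * (alpha p2 / j%:R)%:C + c3 j = 0) ->
  mds_from1 P (filtr a b Xi1 Xi2 U1 U2) eps.
Proof.
move=> he h1 h2 [//|j'] _.
have epsE w : eps j'.+2 w =
    Hc j'.+1 (c1 j'.+1) (c2 j'.+1) (c3 j'.+1) (c4 j'.+1) (XS j'.+2 w).
  by rewrite he // (S1_pref j'.+1 j'.+2) // (S2_pref j'.+1 j'.+2).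
have r1 : complex.Re (c1 j'.+1) * (alpha p1 / j'.+1%:R) + complex.Re (c4 j'.+1) = 0.
  by rewrite -ReMr -ReD h1.
have r2 : complex.Re (c2 j'.+1) * (alpha p2 / j'.+1%:R) + complex.Re (c3 j'.+1) = 0.
  by rewrite -ReMr -ReD h2.
have i1 : complex.Im (c1 j'.+1) * (alpha p1 / j'.+1%:R) + complex.Im (c4 j'.+1) = 0.
  by rewrite -ImMr -ImD h1.
have i2 : complex.Im (c2 j'.+1) * (alpha p2 / j'.+1%:R) + complex.Im (c3 j'.+1) = 0.
  by rewrite -ImMr -ImD h2.
split.
- move=> B0 _; split.
  + exists [set z | complex.Re (Hc j'.+1 (c1 j'.+1) (c2 j'.+1) (c3 j'.+1) (c4 j'.+1) z) \in B0].
    by apply/funext => w /=; rewrite epsE.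
  + exists [set z | complex.Im (Hc j'.+1 (c1 j'.+1) (c2 j'.+1) (c3 j'.+1) (c4 j'.+1) z) \in B0].
    by apply/funext => w /=; rewrite epsE.
- rewrite (_ : (fun w => _) = fun w => (Hf j'.+1 (complex.Re (c1 j'.+1)) (complex.Re (c2 j'.+1))
     (complex.Re (c3 j'.+1)) (complex.Re (c4 j'.+1)) (XS j'.+2 w))%:E); first exact: core_int.
  by apply/funext => w; rewrite epsE ReHc.
- rewrite (_ : (fun w => _) = fun w => (Hf j'.+1 (complex.Im (c1 j'.+1)) (complex.Im (c2 j'.+1))
     (complex.Im (c3 j'.+1)) (complex.Im (c4 j'.+1)) (XS j'.+2 w))%:E); first exact: core_int.
  by apply/funext => w; rewrite epsE ImHc.
- move=> A [B ->]; split.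
  + under eq_integral do rewrite epsE ReHc.
    exact: core.
  + under eq_integral do rewrite epsE ImHc.
    exact: core.
Qed.

End Model2.
Local Close Scope complex_scope.

Theorem lemma3p1 (R : realType) (d : measure_display) (T : measurableType d)
  (P : probability T R) (p1 p2 : R) (a b : int)
  (Xi1 Xi2 : nat -> T -> bool) (U1 U2 : nat -> T -> nat) :
  0 <= p1 <= 1 -> 0 <= p2 <= 1 ->
  (a = 1 \/ a = -1) -> (b = 1 \/ b = -1) ->
  (* laws of the driving variables *)
  (forall n, (2 <= n)%N ->
     measurable [set w | Xi1 n w] /\ P [set w | Xi1 n w] = p1%:E) ->
  (forall n, (2 <= n)%N ->
     measurable [set w | Xi2 n w] /\ P [set w | Xi2 n w] = p2%:E) ->
  (forall n k, (1 <= n)%N -> measurable [set w | U1 n w = k] /\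
     P [set w | U1 n w = k] = (if (1 <= k <= n)%N then n%:R^-1 else 0)%:E) ->
  (forall n k, (1 <= n)%N -> measurable [set w | U2 n w = k] /\
     P [set w | U2 n w = k] = (if (1 <= k <= n)%N then n%:R^-1 else 0)%:E) ->
  (* mutual independence of all xi^(i)_n (n >= 2) and u^(i)_n (n >= 1) *)
  mutually_independent_nat P elValid (elFam Xi1 Xi2 U1 U2) ->
  (* alpha_1 alpha_2 <> 0 and lambda_alpha <> +-1 *)
  alpha p1 * alpha p2 != 0 ->
  lambda_a (alpha p1) (alpha p2) != 1 ->
  lambda_a (alpha p1) (alpha p2) != -1 ->
  let lam := lambda_a (alpha p1) (alpha p2) in
  let r := r_a (alpha p1) (alpha p2) in
  let x := xn a b Xi1 Xi2 U1 U2 r in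
  let y := yn a b Xi1 Xi2 U1 U2 r in
  let ex := epsx a b Xi1 Xi2 U1 U2 lam r in
  let ey := epsy a b Xi1 Xi2 U1 U2 lam r in
  let F := filtr a b Xi1 Xi2 U1 U2 in
  (forall (n : nat) (w : T), (1 <= n)%N ->
     x n w = bet n lam * (x 1%N w +
        \sum_(1 <= j < n) gam j lam / bet j.+1 lam * ex j.+1 w) /\
     y n w = bet n (- lam) * (y 1%N w +
        \sum_(1 <= j < n) gam j (- lam) / bet j.+1 (- lam) * ey j.+1 w)) /\
  mds_from1 P F ex /\ mds_from1 P F ey.
Proof.
move=> hp1 hp2 ha hb hX1 hX2 hU1 hU2 Hind ha0 hl1 hlm1 lam r x y ex ey F.
have [L1 L2 L3] := @lam_props R (alpha p1) (alpha p2) ha0.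
have hle : alpha p1 * alpha p2 <= 1.
  by case/andP: hp1 => h1 h2; case/andP: hp2 => h3 h4; rewrite /alpha; nra.
have nx : forall k, (1 <= k)%N -> lam != k%:R := @not_nat R _ _ L1 hle hl1.
have ny : forall k, (1 <= k)%N -> - lam != k%:R.
  apply: (@not_nat R (- lam) (alpha p1 * alpha p2)) => //; first by rewrite sqrrN.
  by rewrite eqr_oppLR.
have l1 : 1 + lam != 0 by rewrite addrC addr_eq0.
have l2 : 1 - lam != 0 by rewrite subr_eq0 eq_sym.
split.
  move=> n w hn; split.
  - apply: (@formula R (fun m => x m w) (fun m => ex m w) lam) => // m hm.
    exact: recx.
  - apply: (@formula R (fun m => y m w) (fun m => ey m w) (- lam)) => // m hm.
    exact: recy.
split.
- apply: (@mds_gen R d T P p1 p2 a b Xi1 Xi2 U1 U2 hX1 hX2 hU1 hU2 Hind ex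
    (fun j => (1 + lam)^-1) (fun j => - r * (1 + lam)^-1)
    (fun j => lam * (1 + lam)^-1 * (j%:R)^-1)
    (fun j => - (lam * r) * (1 + lam)^-1 * (j%:R)^-1)).
  + move=> j w hj; rewrite /ex /epsx /xn /=; ring.
  + move=> j hj; rewrite divC.
    transitivity ((1 + lam)^-1 * (j%:R)^-1 * ((alpha p1)%:C%C - lam * r)); first ring.
    by rewrite L2 subrr mulr0.
  + move=> j hj; rewrite divC.
    transitivity ((1 + lam)^-1 * (j%:R)^-1 * (lam - r * (alpha p2)%:C%C)); first ring.
    by rewrite L3 subrr mulr0.
- apply: (@mds_gen R d T P p1 p2 a b Xi1 Xi2 U1 U2 hX1 hX2 hU1 hU2 Hind ey
    (fun j => (1 - lam)^-1) (fun j => r * (1 - lam)^-1)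
    (fun j => - lam * (1 - lam)^-1 * (j%:R)^-1)
    (fun j => - (lam * r) * (1 - lam)^-1 * (j%:R)^-1)).
  + move=> j w hj; rewrite /ey /epsy /yn /=; ring.
  + move=> j hj; rewrite divC.
    transitivity ((1 - lam)^-1 * (j%:R)^-1 * ((alpha p1)%:C%C - lam * r)); first ring.
    by rewrite L2 subrr mulr0.
  + move=> j hj; rewrite divC.
    transitivity ((1 - lam)^-1 * (j%:R)^-1 * (r * (alpha p2)%:C%C - lam)); first ring.
    by rewrite L3 subrr mulr0.
Qed.
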